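(* Let $\pi$ be a matching of size $n$. For every integer $p$ with $1\le p\le n-1$ we have $m^{(A)}_p(\pi)=m^{(B)}_p(\pi)$.
   Context: A matching of size $n$ is a set of $n$ disjoint pairs (arches) partitioning $\{1,\dots,2n\}$ which is noncrossing: there are no two arches $\{i<j\}$, $\{k<l\}$ with $i<k<j<l$. Encode $\pi$ by the increasing sequence $a_1<\dots<a_n$ of the smaller elements of its arches (positions of opening parentheses); one has $a_i\le 2i-1$. The Young diagram $Y(\pi)$ is the diagram whose rows, from top to bottom, have lengths $a_n-n\ge a_{n-1}-(n-1)\ge\dots\ge a_1-1$ (row number $n+1-i$ from the top has length $a_i-i$). A box in the $x$-th row from the top and $y$-th column from the left is written $(x,y)$. Rule A: write $\widehat{x}=2n+1-x$. For $1\le p\le n-1$, let $\mathcal{A}^L_p(\pi)$ be the set of arches $\{a_1<a_2\}$ of $\pi$ with $a_1\le p$ and $p<a_2<\widehat p$, and $\mathcal{A}^R_p(\pi)$ the set of arches $\{a_1<a_2\}$ with $p<a_1<\widehat p$ and $\widehat p\le a_2$. Then $|\mathcal{A}^L_p(\pi)|+|\mathcal{A}^R_p(\pi)|$ is even and $m^{(A)}_p(\pi):=\tfrac12(|\mathcal{A}^L_p(\pi)|+|\mathcal{A}^R_p(\pi)|)$. Rule B: label the box $(x,y)$ of $Y(\pi)$ by $n+1-x-y$. The rim of a nonempty Young diagram is the set of its boxes $(x,y)$ such that $(x+1,y+1)$ is not in the diagram; removing the rim leaves a Young diagram, and iterating gives the rim decomposition $R_1,\dots,R_s$ of $Y(\pi)$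 (each $R_\ell$ is the rim of the diagram remaining after removing $R_1,\dots,R_{\ell-1}$). For a rim $R_\ell$, let $i$ be the label of its bottom-left box (the box of $R_\ell$ in its leftmost column), $j$ the label of its top-right box (the box of $R_\ell$ in its topmost row), and $k$ the minimal label in $R_\ell$. Let $B_\ell$ be the multiset $\{k\}\cup\{i,i-1,\dots,k+1\}\cup\{j,j-1,\dots,k+1\}$, and $B_\pi$ the multiset union of all $B_\ell$. Then $m^{(B)}_p(\pi)$ is the multiplicity of $p$ in $B_\pi$. *)

(* Defs.v *)
From mathcomp Require Import all_boot.
Set Implicit Arguments.
Unset Strict Implicit.
Unset Printing Implicit Defensive.

(* An arch is a pair (a1, a2) of positions with a1 < a2.
   A matching of size n is a list of arches, partitioning {1,...,2n}
   (the multiset of all endpoints is exactly 1,...,2n), and noncrossing. *)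
Definition is_matching (n : nat) (pi : seq (nat * nat)) : Prop :=
  [/\ all (fun a => a.1 < a.2) pi,
      perm_eq (flatten [seq [:: a.1; a.2] | a <- pi]) (iota 1 (2 * n))
    & forall a b, a \in pi -> b \in pi ->
        ~~ [&& a.1 < b.1, b.1 < a.2 & a.2 < b.2]].

Definition hat (n x : nat) : nat := (2 * n).+1 - x.

Definition arches_L (n p : nat) (pi : seq (nat * nat)) : seq (nat * nat) :=
  [seq a <- pi | [&& a.1 <= p, p < a.2 & a.2 < hat n p]].
Definition arches_R (n p : nat) (pi : seq (nat * nat)) : seq (nat * nat) :=
  [seq a <- pi | [&& p < a.1, a.1 < hat n p & hat n p <= a.2]].

Definition mA (n : nat) (pi : seq (nat * nat)) (p : nat) : nat :=
  (size (arches_L n p pi) + size (arches_R n p pi))./2.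

(* openers: the increasing sequence a_1 < ... < a_n of smaller endpoints;
   a_i = opener pi i (1-indexed). *)
Definition openers (pi : seq (nat * nat)) : seq nat :=
  sort leq [seq a.1 | a <- pi].
Definition opener (pi : seq (nat * nat)) (i : nat) : nat :=
  nth 0 (openers pi) i.-1.

Definition row_len (n : nat) (pi : seq (nat * nat)) (x : nat) : nat :=
  opener pi (n.+1 - x) - (n.+1 - x).

(* The boxes (x, y) of Y(pi) (row x from the top, column y from the left). *)
Definition young (n : nat) (pi : seq (nat * nat)) : seq (nat * nat) :=
  [seq (x, y) | x <- iota 1 n, y <- iota 1 (row_len n pi x)].

Definition label (n : nat) (b : nat * nat) : nat := n.+1 - b.1 - b.2.

Definition rim (D : seq (nat * nat)) : seq (nat * nat) :=
  [seq b <- D | (b.1.+1, b.2.+1) \notin D].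
Definition rim_remove (D : seq (nat * nat)) : seq (nat * nat) :=
  [seq b <- D | (b.1.+1, b.2.+1) \in D].

Fixpoint rims_fuel (fuel : nat) (D : seq (nat * nat)) : seq (seq (nat * nat)) :=
  match fuel with
  | 0 => [::]
  | f.+1 => if D is [::] then [::] else rim D :: rims_fuel f (rim_remove D)
  end.
Definition rim_decomposition (D : seq (nat * nat)) : seq (seq (nat * nat)) :=
  rims_fuel (size D) D.

Definition seq_min (s : seq nat) : nat := foldr minn (head 0 s) s.
Definition seq_max (s : seq nat) : nat := foldr maxn 0 s.

Definition bottom_left (R : seq (nat * nat)) : nat * nat :=
  let c := seq_min [seq b.2 | b <- R] in
  (seq_max [seq b.1 | b <- R & b.2 == c], c).
Definition top_right (R : seq (nat * nat)) : nat * nat :=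
  let r := seq_min [seq b.1 | b <- R] in
  (r, seq_max [seq b.2 | b <- R & b.1 == r]).

Definition rim_multiset (n : nat) (R : seq (nat * nat)) : seq nat :=
  let i := label n (bottom_left R) in
  let j := label n (top_right R) in
  let k := seq_min [seq label n b | b <- R] in
  k :: iota k.+1 (i - k) ++ iota k.+1 (j - k).

Definition B_multiset (n : nat) (pi : seq (nat * nat)) : seq nat :=
  flatten [seq rim_multiset n R | R <- rim_decomposition (young n pi)].

Definition mB (n : nat) (pi : seq (nat * nat)) (p : nat) : nat :=
  count_mem p (B_multiset n pi).

(* Main.v *)
Require Import Defs.
From Stdlib Require Import Lia.
From mathcomp Require Import all_boot.

Ltac tolia := repeat match goal with
 | H : is_true (~~ (_ <= _)) |- _ => rewrite -ltnNge in H
 | H : is_true (~~ (_ < _)) |- _ => rewrite -leqNgt in H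
 | H : is_true (~~ (_ == _)) |- _ => move/eqP: H => H
 | H : is_true (_ <= _) |- _ => move/leP: H => H
 | H : is_true (_ < _) |- _ => move/ltP: H => H
 | H : is_true (_ == _) |- _ => move/eqP: H => H
 | H : is_true (_ && _) |- _ => let H1 := fresh H in let H2 := fresh H in move/andP: H => [H1 H2]
 | |- is_true false => exfalso
 | |- false = true => exfalso
 | |- ?b = true => change (is_true b)
 | H : ?b = true |- _ => change (is_true b) in H
 | |- is_true (_ <= _) => apply/leP
 | |- is_true (_ < _) => apply/ltP
 | |- is_true (_ == _) => apply/eqP
 | |- is_true (_ && _) => apply/andP; split
 end; cbn [nat_of_bool fst snd] in *; rewrite ?doubleE; unfold addn, subn, muln, addn_rec, subn_rec, muln_rec in *.
Ltac mlia := intros; tolia; lia.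
Ltac bcase := repeat match goal with |- context [?a <= ?b] => let H := fresh "H" in case: (leqP a b) => H end; rewrite /=; try done; mlia.

Lemma sum_ge a b c : a <= b -> \sum_(a <= x < b) (c <= x) = b - maxn a c.
Proof.
elim: b => [|b IH] Hab.
  by move: Hab; rewrite leqn0 => /eqP ->; rewrite big_geq.
case: (ltngtP a b.+1) Hab => // [Hlt|Heq] _.
  rewrite big_nat_recr //= IH //.
  case: (leqP c b) => Hc; rewrite /maxn; case: (ltnP a c) => Hac; mlia.
by rewrite Heq big_geq // /maxn; case: ltnP => H; mlia.
Qed.

Lemma count_split (T : eqType) (P Q R : pred T) (s : seq T) :
  {in s, forall a, P a = Q a || R a} -> {in s, forall a, ~~ (Q a && R a)} ->
  count P s = count Q s + count R s.
Proof.
elim: s => [|a s IH] //= H1 H2.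
rewrite IH; last by move=> b Hb; apply: H2; rewrite inE Hb orbT.
  2: by move=> b Hb; apply: H1; rewrite inE Hb orbT.
have := H2 a (mem_head _ _); rewrite H1 ?mem_head //.
by case: (Q a); case: (R a) => //= _; rewrite ?addnA ?addnS ?addSn ?add0n ?addn0.
Qed.

Lemma count_sub_in (T : eqType) (P Q : pred T) (s : seq T) :
  {in s, forall a, P a -> Q a} -> count P s <= count Q s.
Proof.
elim: s => [|a s IH] //= H.
apply: leq_add; last by apply: IH => b Hb; apply: H; rewrite inE Hb orbT.
by case HP: (P a) => //=; rewrite (H a (mem_head _ _) HP).
Qed.

Lemma count_lt_in (T : eqType) (P Q : pred T) (s : seq T) (b : T) :
  {in s, forall a, P a -> Q a} -> b \in s -> Q b -> ~~ P b -> count P s < count Q s.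
Proof.
elim: s => [|a s IH] //= H Hb HQ HP.
have Hs : {in s, forall a, P a -> Q a} by move=> c Hc; apply: H; rewrite inE Hc orbT.
move: Hb; rewrite inE => /orP [/eqP Eb|Hb].
  subst b; rewrite HQ (negbTE HP) /= add0n add1n ltnS; exact: count_sub_in.
have := IH Hs Hb HQ HP.
case HPa: (P a) => /=; first by rewrite (H a (mem_head _ _) HPa) /= => h; mlia.
case: (Q a) => /= h; mlia.
Qed.


Lemma foldr_min_ub z (s : seq nat) y : y \in s -> foldr minn z s <= y.
Proof.
elim: s => [|a s IH] //=; rewrite inE => /orP [/eqP ->|H].
  exact: geq_minl.
by rewrite geq_min IH ?orbT.
Qed.

Lemma foldr_min_lb z (s : seq nat) v : (forall y, y \in s -> v <= y) -> v <= z -> v <= foldr minn z s.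
Proof.
elim: s => [|a s IH] //= H Hz.
rewrite leq_min H ?mem_head //=; apply: IH => // y Hy; apply: H; by rewrite inE Hy orbT.
Qed.

Lemma seq_min_eq (s : seq nat) v : v \in s -> (forall y, y \in s -> v <= y) -> seq_min s = v.
Proof.
move=> Hv H; rewrite /seq_min; apply/eqP; rewrite eqn_leq foldr_min_ub //=.
apply: foldr_min_lb => //; case: s Hv H => [|a s] //= _ H; apply: H; exact: mem_head.
Qed.

Lemma seq_max_eq (s : seq nat) v : v \in s -> (forall y, y \in s -> y <= v) -> seq_max s = v.
Proof.
move=> Hv H; rewrite /seq_max; apply/eqP; rewrite eqn_leq; apply/andP; split.
  elim: s H {Hv} => [|a s IH] //= H; rewrite geq_max H ?mem_head //= IH // => y Hy.
  by apply: H; rewrite inE Hy orbT.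
elim: s Hv {H} => [|a s IH] //=; rewrite inE => /orP [/eqP ->|Hy].
  exact: leq_maxl.
by rewrite leq_max IH ?orbT.
Qed.

Lemma threshold (P : nat -> bool) N :
  (forall x, 1 <= x -> x < N -> P x.+1 -> P x) ->
  exists r, r <= N /\ forall x, 1 <= x <= N -> P x = (x <= r).
Proof.
elim: N => [|N IH] H.
  by exists 0; split => // x /andP [H1 H2]; have : False by mlia.
have [r [Hr Hx]] : exists r, r <= N /\ forall x, 1 <= x <= N -> P x = (x <= r).
  by apply: IH => x H1 H2; apply: H => //; mlia.
case: (ltngtP r N) Hr => // [Hlt|Heq] _.
  exists r; split; first mlia.
  move=> x /andP [H1 H2]; case: (ltngtP x N.+1) H2 => // [Hl|He] _; first by apply: Hx; mlia.
  subst x; have -> : (N.+1 <= r) = false by apply/negbTE; rewrite -ltnNge; mlia.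
  apply/negbTE/negP => HP.
  have HN : 1 <= N by mlia.
  have := H N HN (ltnSn _) HP; rewrite Hx ?HN ?leqnn // => Hc; mlia.
subst r; case HP: (P N.+1).
  exists N.+1; split => // x /andP [H1 H2]; rewrite H2.
  case: (ltngtP x N.+1) H2 => // [Hl|He] _; first by rewrite Hx //; mlia.
  by subst x.
exists N; split => // x /andP [H1 H2]; case: (ltngtP x N.+1) H2 => // [Hl|He] _.
  by apply: Hx; mlia.
by subst x; rewrite HP ltnn.
Qed.

Lemma argmax (g : nat -> nat) r : 1 <= r ->
  exists x0, 1 <= x0 <= r /\ forall x, 1 <= x <= r -> g x <= g x0.
Proof.
elim: r => [|r IH] // _.
case: r IH => [|r] IH.
  by exists 1; split => // x Hx; have -> : x = 1 by mlia.
have [x0 [H0 Hm]] := IH isT.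
case: (leqP (g r.+2) (g x0)) => Hc.
  exists x0; split; first mlia.
  move=> x Hx; case: (ltngtP x r.+2) => [Hl|Hg|He].
  - apply: Hm; mlia.
  - mlia.
  - by subst x.
exists r.+2; split; first mlia.
move=> x Hx; case: (ltngtP x r.+2) => [Hl|Hg|He].
- apply: leq_trans (ltnW Hc); apply: Hm; mlia.
- mlia.
- by subst x.
Qed.

Fixpoint mini (g : nat -> nat) (a d : nat) : nat :=
  match d with 0 => g a | d'.+1 => minn (mini g a d') (g (a + d)) end.
Definition minJ g a b := mini g a (b - a).

Lemma mini_lb g a d t : a <= t <= a + d -> mini g a d <= g t.
Proof.
elim: d => [|d IH] /= Ht.
  by have -> : t = a by mlia.
case: (ltngtP t (a + d.+1)) => [Hl|Hg|He]; last by subst t; exact: geq_minr.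
  by rewrite geq_min IH //; mlia.
mlia.
Qed.

Lemma mini_att g a d : exists t, a <= t <= a + d /\ g t = mini g a d.
Proof.
elim: d => [|d [t [Ht Ht']]] /=; first by exists a; split => //; mlia.
rewrite /minn; case: ltnP => _.
  by exists t; split => //; mlia.
by exists (a + d.+1); split => //; mlia.
Qed.

Lemma minJ_char g a b v : a <= b -> (forall t, a <= t <= b -> v <= g t) ->
  (exists t, a <= t <= b /\ g t = v) -> minJ g a b = v.
Proof.
move=> Hab Hlb [t [Ht Hv]].
have [t' [Ht' Ht'']] := mini_att g a (b - a).
rewrite /minJ -Ht''; apply/eqP; rewrite eqn_leq; apply/andP; split.
  rewrite -Hv Ht''; apply: mini_lb; mlia.
by apply: Hlb; mlia.
Qed.

Lemma minJ_lb g a b t : a <= t <= b -> minJ g a b <= g t.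
Proof. move=> Ht; apply: mini_lb; mlia. Qed.

Lemma minJ_att g a b : a <= b -> exists t, a <= t <= b /\ g t = minJ g a b.
Proof.
move=> Hab; have [t [Ht Ht']] := mini_att g a (b - a).
by exists t; split => //; mlia.
Qed.


Definition youngf (n : nat) (f : nat -> nat) : seq (nat * nat) :=
  [seq (x, y) | x <- iota 1 n, y <- iota 1 (f x)].
Definition Inv (n : nat) (f : nat -> nat) :=
  (forall x, 0 < x -> f x.+1 <= f x) /\ (forall x, f x <= n - x).
Definition shiftf (f : nat -> nat) := fun x => f x.+1 - 1.

Lemma mem_youngf n f a b :
  ((a, b) \in youngf n f) = (1 <= a <= n) && (1 <= b <= f a).
Proof.
apply/allpairsPdep/andP.
  move=> [x [y [Hx Hy [-> ->]]]]; move: Hx Hy; rewrite !mem_iota => Hx Hy.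
  split; mlia.
move=> [H1 H2]; exists a, b; split => //; rewrite mem_iota; mlia.
Qed.

Lemma Inv_anti n f x x' : Inv n f -> 1 <= x <= x' -> f x' <= f x.
Proof.
move=> [Hm _] /andP [H1]; elim: x' => [|x' IH] H2; first mlia.
case: (ltngtP x x'.+1) H2 => // [Hl|He] _.
  by apply: leq_trans (IH _); [apply: Hm; mlia | mlia].
by rewrite He.
Qed.

Lemma Inv_shift n f : Inv n f -> Inv n (shiftf f).
Proof.
move=> [Hm Hb]; split => [x Hx|x]; rewrite /shiftf.
  by have := Hm x.+1 isT; mlia.
by have := Hb x.+1; mlia.
Qed.

Lemma filter_iota_lt k m c : c <= k + m ->
  [seq y <- iota k m | y < c] = iota k (c - k).
Proof.
elim: m k => [|m IH] k H /=.
  by have -> : c - k = 0 by mlia.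
case: (ltnP k c) => Hk.
  rewrite IH; last mlia.
  by have -> : c - k = (c - k.+1).+1 by mlia.
rewrite IH; last mlia.
have -> : c - k = 0 by mlia.
by have -> : c - k.+1 = 0 by mlia.
Qed.

Lemma rim_remove_young n f : Inv n f -> rim_remove (youngf n f) = youngf n (shiftf f).
Proof.
move=> HI; have [Hm Hb] := HI.
rewrite /rim_remove {1}/youngf filter_flatten -map_comp /youngf.
rewrite -/(youngf n f). congr flatten; apply/eq_in_map => x; rewrite mem_iota => Hx /=.
rewrite filter_map; congr map.
rewrite (@eq_filter _ _ (fun y => y < f x.+1)); last first.
  move=> y /=; rewrite mem_youngf.
  have := Hb x.+1; case: (ltnP y (f x.+1)) => Hy Hb'.
    by rewrite andbT; apply/andP; split; [apply/andP; split|]; mlia.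
  by rewrite !andbF.
rewrite filter_iota_lt; last by have := Hm x ltac:(mlia); mlia.
by rewrite /shiftf; congr iota; mlia.
Qed.

Lemma mem_rim_young n f x y : Inv n f ->
  ((x, y) \in rim (youngf n f)) = [&& 1 <= x <= n, 1 <= y <= f x & f x.+1 <= y].
Proof.
move=> [Hm Hb]; rewrite /rim mem_filter /= !mem_youngf.
have := Hb x.+1 => Hb'.
apply/idP/idP.
  move=> /andP [H1 /andP [H2 H3]]; rewrite H2 H3 /=.
  case: (ltnP y (f x.+1)) => Hy //.
  by move: H1; have -> : (1 <= x.+1 <= n) && (1 <= y.+1 <= f x.+1) by apply/andP; split; mlia.
move=> /and3P [H1 H2 H3]; rewrite H1 H2 /=.
rewrite andbT; apply/negP => /andP [H4 H5]; mlia.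
Qed.

Lemma iota_range a b p : (a.+1 <= p < a.+1 + (b - a)) = (a < p) && (p <= b).
Proof. by apply/idP/idP => /andP [H1 H2]; apply/andP; split; mlia. Qed.

Lemma count_rim_multiset n R p :
  count_mem p (rim_multiset n R) =
  let i := label n (bottom_left R) in
  let j := label n (top_right R) in
  let k := seq_min [seq label n b | b <- R] in
  (k == p) + ((k < p) && (p <= i)) + ((k < p) && (p <= j)).
Proof.
rewrite /rim_multiset /= count_cat !count_uniq_mem ?iota_uniq // !mem_iota.
by rewrite addnA !iota_range.
Qed.

Lemma fr0 n f r (HI : Inv n f) (Hr : forall x, 0 < x -> (0 < f x) = (x <= r)) (Hr1 : 1 <= r <= n) : f r.+1 = 0.
Proof. by apply/eqP; rewrite -leqn0 leqNgt Hr // ltnn. Qed.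

Lemma rim_bl n f r (HI : Inv n f) (Hr : forall x, 0 < x -> (0 < f x) = (x <= r)) (Hr1 : 1 <= r <= n) : label n (bottom_left (rim (youngf n f))) = n - r.
Proof.
have Hrin : (r, 1) \in rim (youngf n f).
  rewrite mem_rim_young // (@fr0 n f r HI Hr Hr1) Hr1 /= andbT; rewrite (Hr r) ?leqnn //; mlia.
rewrite /bottom_left.
have -> : seq_min [seq b.2 | b <- (rim (youngf n f))] = 1.
  apply: seq_min_eq; first by apply/mapP; exists (r, 1).
  move=> y /mapP [[x y'] Hb ->] /=; move: Hb; rewrite mem_rim_young // => /and3P [_ /andP [H _] _] //.
have -> : seq_max [seq b.1 | b <- rim (youngf n f) & b.2 == 1] = r.
  apply: seq_max_eq; first by apply/mapP; exists (r, 1) => //; rewrite mem_filter Hrin.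
  move=> z /mapP [[x y] Hb ->] /=; move: Hb; rewrite mem_filter mem_rim_young // /=.
  move=> /andP [/eqP Hy /and3P [/andP [H1 _] /andP [_ H2] _]].
  by rewrite -Hr //; subst y.
rewrite /label /=; mlia.
Qed.

Lemma f1pos n f r (HI : Inv n f) (Hr : forall x, 0 < x -> (0 < f x) = (x <= r)) (Hr1 : 1 <= r <= n) : 0 < f 1.
Proof. by rewrite Hr //; case/andP: Hr1. Qed.

Lemma rim_tr n f r (HI : Inv n f) (Hr : forall x, 0 < x -> (0 < f x) = (x <= r)) (Hr1 : 1 <= r <= n) : label n (top_right (rim (youngf n f))) = n - f 1.
Proof.
have H1in : (1, f 1) \in rim (youngf n f).
  rewrite mem_rim_young // (@f1pos n f r HI Hr Hr1) leqnn /=; have [Hm _] := HI; rewrite Hm // andbT; mlia.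
rewrite /top_right.
have -> : seq_min [seq b.1 | b <- (rim (youngf n f))] = 1.
  apply: seq_min_eq; first by apply/mapP; exists (1, f 1).
  move=> z /mapP [[x y'] Hb ->] /=; move: Hb; rewrite mem_rim_young // => /and3P [/andP [H _] _ _] //.
have -> : seq_max [seq b.2 | b <- rim (youngf n f) & b.1 == 1] = f 1.
  apply: seq_max_eq; first by apply/mapP; exists (1, f 1) => //; rewrite mem_filter H1in.
  move=> z /mapP [[x y] Hb ->] /=; move: Hb; rewrite mem_filter mem_rim_young // /=.
  by move=> /andP [/eqP Hx /and3P [_ /andP [_ H2] _]]; subst x.
rewrite /label /=; mlia.
Qed.

Lemma rim_k n f r x0 (HI : Inv n f) (Hr : forall x, 0 < x -> (0 < f x) = (x <= r)) (Hr1 : 1 <= r <= n) (Hx0 : 1 <= x0 <= r) (Hx0m : forall x, 1 <= x <= r -> x + f x <= x0 + f x0) : seq_min [seq label n b | b <- (rim (youngf n f))] = n.+1 - (x0 + f x0).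
Proof.
have Hf0 : 0 < f x0 by rewrite Hr; mlia.
have Hin : (x0, f x0) \in rim (youngf n f).
  rewrite mem_rim_young // Hf0 leqnn /=; have [Hm _] := HI; rewrite Hm ?andbT; mlia.
apply: seq_min_eq.
  by apply/mapP; exists (x0, f x0) => //; rewrite /label /=; mlia.
move=> z /mapP [[x y] Hb ->]; move: Hb; rewrite mem_rim_young // /label /=.
move=> /and3P [/andP [H1 H2] /andP [H3 H4] H5].
have Hxr : x <= r by rewrite -Hr //; mlia.
have := Hx0m x ltac:(mlia); mlia.
Qed.



Definition pos n f x := n.+1 - x + f x.
Definition cnt n (f : nat -> nat) t := \sum_(1 <= x < n.+1) (pos n f x <= t).
Definition hf n f t := (cnt n f t) * 2 - t.
Definition Q n f p :=
  ((hf n f p - minJ (hf n f) p (2 * n - p)) + (hf n f (2 * n - p) - minJ (hf n f) p (2 * n - p)))./2.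

Section Path.
Variables (n : nat) (f : nat -> nat) (r : nat).
Hypothesis HI : Inv n f.
Hypothesis Hr : forall x, 0 < x -> (0 < f x) = (x <= r).
Hypothesis Hrn : (r <= n)%coq_nat.
#[local] Set Default Proof Using "All".

Lemma fbound x : f x <= n - x.
Proof. by case: HI. Qed.

Lemma fzero x : r < x -> f x = 0.
Proof. move=> H; apply/eqP; rewrite -leqn0 leqNgt Hr -?ltnNge //; mlia. Qed.

Lemma fpos x : 1 <= x <= r -> 0 < f x.
Proof. by move=> /andP [H1 H2]; rewrite Hr. Qed.

Lemma fanti x x' : 1 <= x <= x' -> f x' <= f x.
Proof. exact: Inv_anti HI. Qed.

Lemma pos_anti x x' : 1 <= x <= x' -> pos n f x' <= pos n f x.
Proof. move=> H; have := @fanti x x' H; rewrite /pos; mlia. Qed.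

Definition Ssum t := \sum_(1 <= x < r.+1) (pos n f x <= t).

Lemma cnt_split t : cnt n f t = Ssum t + minn (n - r) t.
Proof.
rewrite /cnt /Ssum (@big_cat_nat _ _ _ r.+1) /=; [|mlia|mlia].
congr (_ + _).
rewrite (@eq_big_nat _ _ _ _ _ _ (fun x => nat_of_bool (n.+1 - t <= x))); last first.
  move=> x Hx; rewrite /pos fzero; last mlia.
  by congr nat_of_bool; apply/idP/idP; mlia.
rewrite sum_ge; last mlia.
rewrite /minn /maxn; case: ltnP => H1; case: ltnP => H2; mlia.
Qed.

Lemma S_low t : t <= n - r -> Ssum t = 0.
Proof.
move=> Ht; rewrite /Ssum big_nat_cond big1 // => x /andP [/andP [H1 H2] _].
have := @fpos x ltac:(mlia) => Hf.
apply/eqP; rewrite eqb0 -ltnNge /pos; mlia.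
Qed.

Lemma S_high t : pos n f 1 <= t -> Ssum t = r.
Proof.
move=> Ht; rewrite /Ssum (@eq_big_nat _ _ _ _ _ _ (fun _ => 1)).
  by rewrite sum_nat_const_nat; mlia.
move=> x Hx; have := @pos_anti 1 x ltac:(mlia) => Hp.
by have -> : pos n f x <= t by mlia.
Qed.

Lemma S_mid t y : 1 <= y <= r -> (forall x, 1 <= x <= r -> (t < pos n f x) = (x <= y)) ->
  Ssum t = r - y.
Proof.
move=> Hy Hx; rewrite /Ssum (@eq_big_nat _ _ _ _ _ _ (fun x => nat_of_bool (y.+1 <= x))).
  rewrite sum_ge; last mlia.
  rewrite /maxn; case: ltnP => H; mlia.
move=> x Hx'; rewrite leqNgt Hx; last mlia.
by rewrite -ltnNge.
Qed.

Lemma hf_low t : t <= n - r -> hf n f t = t.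
Proof.
move=> Ht; rewrite /hf cnt_split S_low // add0n.
rewrite /minn; case: ltnP => H; mlia.
Qed.

Lemma hf_high t : pos n f 1 <= t -> hf n f t = 2 * n - t.
Proof.
move=> Ht; rewrite /hf cnt_split S_high //.
have := fbound 1; rewrite /pos in Ht.
rewrite /minn; case: ltnP => H; mlia.
Qed.

Lemma y_exists t : (1 <= r)%coq_nat -> t < pos n f 1 ->
  exists y, 1 <= y <= r /\ forall x, 1 <= x <= r -> (t < pos n f x) = (x <= y).
Proof.
move=> Hr1 Ht.
have Hanti : forall x, 1 <= x -> x < r -> t < pos n f x.+1 -> t < pos n f x.
  move=> x H1 H2 H3; apply: leq_trans H3 _; apply: pos_anti; mlia.
have [y [Hy Hyx]] := @threshold (fun x => t < pos n f x) r Hanti.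
exists y; split => //.
have := Hyx 1 ltac:(mlia); rewrite Ht => /esym H; by rewrite H Hy.
Qed.


Lemma hf_mid t x0 : (1 <= r)%coq_nat -> 1 <= x0 <= r ->
  (forall x, 1 <= x <= r -> x + f x <= x0 + f x0) ->
  n - r < t -> t < pos n f 1 ->
  [/\ hf n f t + 2 <= t, hf n f t + 2 + t <= 2 * n, n - (x0 + f x0) <= hf n f t
    & t <= cnt n f t * 2].
Proof.
move=> Hr1 Hx0 Hx0m Ht1 Ht2.
have [y [Hy Hyx]] := @y_exists t Hr1 Ht2.
have Hc : cnt n f t = n - y.
  rewrite cnt_split (@S_mid t y Hy Hyx) /minn; case: ltnP => H; mlia.
have Hty : t < pos n f y by rewrite Hyx ?leqnn.
have Hfy := fbound y.
have Hm := Hx0m y Hy.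
have Hnext : y < r -> pos n f y.+1 <= t.
  move=> Hyr; rewrite leqNgt Hyx; last mlia.
  by rewrite ltnn.
have Hfy1 : y < r -> 0 < f y.+1 by move=> Hyr; apply: fpos; mlia.
rewrite /hf Hc; rewrite /pos in Hty Hnext.
case: (ltnP y r) => Hyr.
  have := Hnext Hyr; have := Hfy1 Hyr => H1 H2.
  split; mlia.
have Hyr' : y = r by mlia.
subst y; split; mlia.
Qed.

Lemma valley x0 : (1 <= r)%coq_nat -> 1 <= x0 <= r ->
  let v := pos n f x0 - 1 in
  [/\ n - r < v, v < pos n f 1 & hf n f v = n - (x0 + f x0)].
Proof.
move=> Hr1 Hx0 v.
have Hf0 := @fpos x0 Hx0.
have Hfb := fbound x0.
have Hp1 := @pos_anti 1 x0 ltac:(mlia).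
have Hyx : forall x, 1 <= x <= r -> (v < pos n f x) = (x <= x0).
  move=> x Hx; case: (leqP x x0) => Hxx.
    have := @pos_anti x x0 ltac:(mlia); rewrite /v /pos; mlia.
  have := @fanti x0 x ltac:(mlia); rewrite /v /pos => H.
  apply/negbTE; rewrite -leqNgt; mlia.
have Hc : cnt n f v = n - x0.
  rewrite cnt_split (@S_mid v x0 Hx0 Hyx) /minn; case: ltnP => H; rewrite /v /pos in H *; mlia.
rewrite /hf Hc /v /pos; rewrite /v /pos in Hp1; split; mlia.
Qed.

Lemma cnt_shift t : (1 <= r)%coq_nat ->
  cnt n (shiftf f) t + (pos n f 1 <= t) = cnt n f t + (n - r < t).
Proof.
move=> Hr1.
rewrite cnt_split /cnt /Ssum (@big_cat_nat _ _ _ r) /=; [|mlia|mlia].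
rewrite (@big_ltn _ _ _ 1 r.+1) /=; last mlia.
have -> : \sum_(1 <= i < r) (pos n (shiftf f) i <= t) = \sum_(2 <= i < r.+1) (pos n f i <= t).
  rewrite [RHS]big_add1 /=; apply: eq_big_nat => x Hx.
  have := @fpos x.+1 ltac:(mlia) => H.
  by rewrite /pos /shiftf; congr nat_of_bool; congr (_ <= _); mlia.
rewrite (@eq_big_nat _ _ _ r n.+1 _ (fun x => nat_of_bool (n.+1 - t <= x))); last first.
  move=> x Hx; rewrite /pos /shiftf fzero; last mlia.
  by congr nat_of_bool; apply/idP/idP; mlia.
rewrite sum_ge; last mlia.
rewrite /minn /maxn; case: ltnP => H1; case: ltnP => H2; case: ltnP => H3;
  case: (leqP (pos n f 1) t) => H4; mlia.
Qed.

Lemma hfs_low t : (1 <= r)%coq_nat -> t <= n - r -> hf n (shiftf f) t = hf n f t.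
Proof.
move=> Hr1 Ht; have := cnt_shift t Hr1.
have Hf1 := @fpos 1 ltac:(mlia).
have -> : (pos n f 1 <= t) = false by apply/negbTE; rewrite -ltnNge /pos; mlia.
have -> : (n - r < t) = false by apply/negbTE; rewrite -leqNgt.
by rewrite /hf !addn0 => ->.
Qed.

Lemma hfs_high t : (1 <= r)%coq_nat -> pos n f 1 <= t -> hf n (shiftf f) t = hf n f t.
Proof.
move=> Hr1 Ht; have := cnt_shift t Hr1.
have Hf1 := @fpos 1 ltac:(mlia).
have -> : (n - r < t) = true by rewrite /pos in Ht; mlia.
by rewrite Ht /hf => /addIn ->.
Qed.

Lemma hfs_mid t x0 : (1 <= r)%coq_nat -> 1 <= x0 <= r ->
  (forall x, 1 <= x <= r -> x + f x <= x0 + f x0) ->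
  n - r < t -> t < pos n f 1 -> hf n (shiftf f) t = hf n f t + 2.
Proof.
move=> Hr1 Hx0 Hx0m Ht1 Ht2; have := cnt_shift t Hr1.
have [_ _ _ H] := @hf_mid t x0 Hr1 Hx0 Hx0m Ht1 Ht2.
have -> : (pos n f 1 <= t) = false by apply/negbTE; rewrite -ltnNge.
rewrite Ht1 /hf addn0 => ->; mlia.
Qed.

End Path.

Lemma half_shift X Y X' Y' a b : X = X' + a * 2 -> Y = Y' + b * 2 ->
  (X + Y)./2 = a + b + (X' + Y')./2.
Proof.
move=> -> ->.
have -> : X' + a * 2 + (Y' + b * 2) = (X' + Y') + (a + b).*2.
  rewrite -muln2; mlia.
by rewrite halfD odd_double andbF add0n doubleK addnC.
Qed.

Lemma Q0 n f p : Inv n f -> f 1 = 0 -> 1 <= p <= n.-1 -> Q n f p = 0.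
Proof.
move=> HI Hf1 Hp.
have Hr : forall x, 0 < x -> (0 < f x) = (x <= 0).
  move=> x Hx; have := @Inv_anti n f 1 x HI ltac:(mlia); rewrite Hf1 leqn0 => /eqP ->.
  by rewrite ltnn; case: x Hx.
have Hrn : (0 <= n)%coq_nat by mlia.
have Hpos : pos n f 1 = n by rewrite /pos Hf1; mlia.
have Hm : minJ (hf n f) p (2 * n - p) = p.
  apply: minJ_char; first mlia.
    move=> t Ht; case: (leqP t (n - 0)) => Hz.
      rewrite (@hf_low n f 0 HI Hr Hrn) //; mlia.
    rewrite (@hf_high n f 0 HI Hr Hrn); [mlia|rewrite Hpos; mlia].
  exists p; split; first mlia.
  rewrite (@hf_low n f 0 HI Hr Hrn) //; mlia.
rewrite /Q Hm (@hf_low n f 0 HI Hr Hrn); last mlia.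
rewrite (@hf_high n f 0 HI Hr Hrn); last by rewrite Hpos; mlia.
have -> : 2 * n - (2 * n - p) - p = 0 by mlia.
by rewrite subnn.
Qed.

Lemma Qrec n f r x0 p : Inv n f -> (forall x, 0 < x -> (0 < f x) = (x <= r)) ->
  (1 <= r)%coq_nat -> (r <= n)%coq_nat -> 1 <= x0 <= r ->
  (forall x, 1 <= x <= r -> x + f x <= x0 + f x0) -> 1 <= p <= n.-1 ->
  Q n f p = ((n.+1 - (x0 + f x0) == p) + ((n.+1 - (x0 + f x0) < p) && (p <= n - r))
             + ((n.+1 - (x0 + f x0) < p) && (p <= n - f 1))) + Q n (shiftf f) p.
Proof.
move=> HI Hr Hr1 Hrn Hx0 Hx0m Hp.
move: (Hp) => /andP [Hp1 Hp2]; rewrite -subn1 in Hp2.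
have hl := @hf_low n f r HI Hr Hrn.
have hh := @hf_high n f r HI Hr Hrn.
have hm := fun t => @hf_mid n f r HI Hr Hrn t x0 Hr1 Hx0 Hx0m.
have [Hv1 Hv2 Hv3] := @valley n f r HI Hr Hrn x0 Hr1 Hx0.
have hsl := fun t => @hfs_low n f r HI Hr Hrn t Hr1.
have hsh := fun t => @hfs_high n f r HI Hr Hrn t Hr1.
have hsm := fun t => @hfs_mid n f r HI Hr Hrn t x0 Hr1 Hx0 Hx0m.
have Hf1 := @fpos n f r HI Hr Hrn 1 ltac:(mlia).
have Hfb1 := @fbound n f r HI Hr Hrn 1.
have Hpos1 : pos n f 1 = n + f 1 by rewrite /pos; mlia.
have Hf0 := @fpos n f r HI Hr Hrn x0 Hx0.
have Hfx0 := @fbound n f r HI Hr Hrn x0.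
have Hm1 := Hx0m 1 ltac:(mlia).
have Hfr := @fpos n f r HI Hr Hrn r ltac:(mlia).
have Hmr := Hx0m r ltac:(mlia).
set v := pos n f x0 - 1 in Hv1 Hv2 Hv3.
set q := 2 * n - p.
have Hpq : p <= q by rewrite /q; mlia.
rewrite /Q -/q.
case: (boolP ((p <= n - r) && (p <= n - f 1))) => HB.
-
  move/andP: (HB) => [HBi HBj].
  have Hm : minJ (hf n f) p q = minn p (n - (x0 + f x0)).
    apply: minJ_char => //.
      move=> t Ht; case: (leqP t (n - r)) => Hz1.
        rewrite hl //; rewrite geq_min; apply/orP; left; mlia.
      case: (ltnP t (pos n f 1)) => Hz2.
        have [_ _ H3 _] := hm t Hz1 Hz2; rewrite geq_min H3 orbT //.
      rewrite hh //; rewrite geq_min; apply/orP; left; rewrite /q in Ht; mlia.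
    rewrite /minn; case: ltnP => Hc.
      exists p; split; first mlia. by rewrite hl.
    exists v; split; last by rewrite Hv3.
    rewrite /q; rewrite Hpos1 in Hv2; mlia.
  have Hm' : minJ (hf n (shiftf f)) p q = minn p (n - (x0 + f x0) + 2).
    apply: minJ_char => //.
      move=> t Ht; case: (leqP t (n - r)) => Hz1.
        rewrite hsl // hl //; rewrite geq_min; apply/orP; left; mlia.
      case: (ltnP t (pos n f 1)) => Hz2.
        have [_ _ H3 _] := hm t Hz1 Hz2; rewrite hsm // geq_min leq_add2r H3 orbT //.
      rewrite hsh // hh //; rewrite geq_min; apply/orP; left; rewrite /q in Ht; mlia.
    rewrite /minn; case: ltnP => Hc.
      exists p; split; first mlia. by rewrite hsl // hl.
    exists v; split; last by rewrite hsm // Hv3.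
    rewrite /q; rewrite Hpos1 in Hv2; mlia.
  have Hhq : pos n f 1 <= q by rewrite Hpos1 /q; mlia.
  rewrite Hm Hm' hsl // hl // hsh // hh //.
  have -> : 2 * n - q = p by rewrite /q; mlia.
  rewrite !addnn !doubleK.
  rewrite HBi HBj !andbT.
  rewrite /minn; case: (ltnP p (n - (x0 + f x0))) => H1;
    case: (ltnP p (n - (x0 + f x0) + 2)) => H2;
    case: (ltngtP (n.+1 - (x0 + f x0)) p) => H3 /=; mlia.
-
  have [tw [Htw1 [Htw2 Htw3]]] : exists tw, p <= tw <= q /\ (n - r < tw < pos n f 1) /\ hf n f tw + 2 <= p.
    case: (leqP p (n - r)) HB => HBi HB /=.
      have HBj : n - f 1 < p by rewrite -ltnNge in HB.
      have Hz1 : n - r < q by rewrite /q; mlia.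
      have Hz2 : q < pos n f 1 by rewrite Hpos1 /q; mlia.
      have [_ H2 _ _] := hm q Hz1 Hz2.
      exists q; split; first mlia. split; first mlia. rewrite /q in H2 *; mlia.
    have Hz2 : p < pos n f 1 by rewrite Hpos1; mlia.
    have [H1 _ _ _] := hm p HBi Hz2.
    by exists p; split; first mlia; split; first mlia.
  have Hmle : minJ (hf n f) p q + 2 <= p.
    apply: leq_trans Htw3; rewrite leq_add2r; exact: minJ_lb.
  have Hm' : minJ (hf n (shiftf f)) p q = minJ (hf n f) p q + 2.
    apply: minJ_char => //.
      move=> t Ht; case: (leqP t (n - r)) => Hz1.
        rewrite hsl // hl //; mlia.
      case: (ltnP t (pos n f 1)) => Hz2.
        by rewrite hsm // leq_add2r; exact: minJ_lb.
      rewrite hsh // hh //; rewrite /q in Ht; mlia.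
    have [ts [Hts1 Hts2]] := @minJ_att (hf n f) p q Hpq.
    exists ts; split => //.
    case: (leqP ts (n - r)) => Hz1.
      rewrite hl // in Hts2; mlia.
    case: (ltnP ts (pos n f 1)) => Hz2.
      by rewrite hsm // Hts2.
    rewrite hh // in Hts2; rewrite /q in Hts1; mlia.
  have Hmp : minJ (hf n f) p q <= hf n f p by apply: minJ_lb; mlia.
  have Hmq : minJ (hf n f) p q <= hf n f q by apply: minJ_lb; mlia.
  rewrite Hm'; set m := minJ (hf n f) p q.
  have Hqz1 : n - r < q by rewrite /q; mlia.
  case: (leqP p (n - r)) HB => HBi HB /=; case: (leqP p (n - f 1)) HB => HBj HB //=.
  +
    have Hz2 : q < pos n f 1 by rewrite Hpos1 /q; mlia.
    rewrite (hsl p) // (hl p) // (hsm q) //.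
    rewrite (@half_shift _ _ (p - (m + 2)) (hf n f q + 2 - (m + 2)) 1 0); [|mlia|mlia].
    case: (ltngtP (n.+1 - (x0 + f x0)) p) => H3 /=; mlia.
  +
    have Hz2 : p < pos n f 1 by rewrite Hpos1; mlia.
    have Hhq : pos n f 1 <= q by rewrite Hpos1 /q; mlia.
    have [H1 _ _ _] := hm p HBi Hz2.
    rewrite (hsm p) // (hsh q) // (hh q) //.
    rewrite (@half_shift _ _ (hf n f p + 2 - (m + 2)) (2 * n - q - (m + 2)) 0 1); [|mlia|rewrite /q; mlia].
    case: (ltngtP (n.+1 - (x0 + f x0)) p) => H3 /=; mlia.
  +
    have Hz2 : p < pos n f 1 by rewrite Hpos1; mlia.
    have Hz2' : q < pos n f 1 by rewrite Hpos1 /q; mlia.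
    rewrite (hsm p) // (hsm q) //.
    rewrite (@half_shift _ _ (hf n f p + 2 - (m + 2)) (hf n f q + 2 - (m + 2)) 0 0); [|mlia|mlia].
    case: (ltngtP (n.+1 - (x0 + f x0)) p) => H3 /=; mlia.
Qed.


Lemma get_r n f : Inv n f ->
  exists r, (r <= n)%coq_nat /\ forall x, 0 < x -> (0 < f x) = (x <= r).
Proof.
move=> HI; have [Hm Hb] := HI.
have Hanti : forall x, 1 <= x -> x < n -> 0 < f x.+1 -> 0 < f x.
  move=> x H1 H2 H3; apply: leq_trans H3 _; exact: Hm.
have [r [Hrn Hr]] := @threshold (fun x => 0 < f x) n Hanti.
exists r; split; first mlia.
move=> x Hx; case: (leqP x n) => Hxn; first by apply: Hr; mlia.
have := Hb x; have -> : n - x = 0 by mlia.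
rewrite leqn0 => /eqP ->; rewrite ltnn; apply/esym/negbTE; rewrite -ltnNge; mlia.
Qed.

Lemma youngf_nil n f : (forall x, 0 < x -> f x = 0) -> youngf n f = [::].
Proof.
move=> H; case E: (youngf n f) => [|[a b] l] //.
have : (a, b) \in youngf n f by rewrite E mem_head.
rewrite mem_youngf => /andP [/andP [H1 _] /andP [H2 H3]].
by rewrite H in H3; [mlia|mlia].
Qed.

Lemma rims_step fuel D : D != [::] -> rims_fuel fuel.+1 D = rim D :: rims_fuel fuel (rim_remove D).
Proof. by case: D. Qed.

Lemma flat_cons (T : Type) (x : seq T) s : flatten (x :: s) = x ++ flatten s.
Proof. by []. Qed.

Lemma mB_fuel n p : 1 <= p <= n.-1 -> forall fuel f, Inv n f -> size (youngf n f) <= fuel ->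
  count_mem p (flatten [seq rim_multiset n R | R <- rims_fuel fuel (youngf n f)]) = Q n f p.
Proof.
move=> Hp; elim=> [|fuel IH] f HI Hs; have [r [Hrn Hr]] := @get_r n f HI.
- case: (posnP r) => Hr0.
    subst r; have Hf : forall x, 0 < x -> f x = 0.
      by move=> x Hx; apply/eqP; rewrite -leqn0 leqNgt Hr // -ltnNge.
    by rewrite youngf_nil //= Q0 //; apply: Hf.
  have Hr1 : 1 <= r <= n by mlia.
  have : (1, f 1) \in youngf n f.
    by rewrite mem_youngf (@f1pos n f r HI Hr Hr1) leqnn /=; mlia.
  by move: Hs; rewrite leqn0 => /nilP ->.
- case: (posnP r) => Hr0.
    subst r; have Hf : forall x, 0 < x -> f x = 0.
      by move=> x Hx; apply/eqP; rewrite -leqn0 leqNgt Hr // -ltnNge.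
    by rewrite youngf_nil //= Q0 //; apply: Hf.
  have Hr1 : 1 <= r <= n by mlia.
  have Hin : (1, f 1) \in rim (youngf n f).
    rewrite mem_rim_young // (@f1pos n f r HI Hr Hr1) leqnn /=.
    have [Hm Hb] := HI; rewrite Hm // andbT; mlia.
  have [x0 [Hx0 Hx0m]] := @argmax (fun x => x + f x) r ltac:(mlia).
  have Hsz : size (rim (youngf n f)) + size (rim_remove (youngf n f)) = size (youngf n f).
    rewrite /rim /rim_remove !size_filter addnC.
    rewrite -(count_predC (fun b : nat * nat => (b.1.+1, b.2.+1) \in youngf n f)).
    by congr (_ + _); apply: eq_count => b.
  have Hpos : 0 < size (rim (youngf n f)) by case: (rim _) Hin.
  rewrite rim_remove_young // in Hsz.
  have Hne : youngf n f != [::] by case: (youngf n f) Hsz Hpos => // _; mlia.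
  rewrite rims_step // map_cons flat_cons count_cat rim_remove_young // IH; last first.
      move: Hs; rewrite -Hsz; mlia.
    exact: Inv_shift.
  rewrite count_rim_multiset /= (@rim_bl n f r HI Hr Hr1) (@rim_tr n f r HI Hr Hr1).
  rewrite (@rim_k n f r x0 HI Hr Hr1 Hx0 Hx0m).
  rewrite (@Qrec n f r x0 p HI Hr ltac:(mlia) Hrn Hx0 Hx0m Hp).
  by [].
Qed.


Definition endpts (pi : seq (nat * nat)) := flatten [seq [:: a.1; a.2] | a <- pi].

Lemma count_endpts (P : pred nat) pi :
  count P (endpts pi) = count (fun a => P a.1) pi + count (fun a => P a.2) pi.
Proof.
elim: pi => [|a pi IH] //=; rewrite /endpts /= in IH *; rewrite IH; mlia.
Qed.

Lemma mem_endpts1 pi a : a \in pi -> a.1 \in endpts pi.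
Proof. move=> H; apply/flattenP; exists [:: a.1; a.2]; [apply/mapP; exists a|]; by rewrite ?mem_head. Qed.

Lemma mem_endpts2 pi a : a \in pi -> a.2 \in endpts pi.
Proof. move=> H; apply/flattenP; exists [:: a.1; a.2]; [apply/mapP; exists a|]; by rewrite ?inE ?eqxx ?orbT. Qed.

Lemma count_iota_le t N : count (fun v => v <= t) (iota 1 N) = minn t N.
Proof.
elim: N => [|N IH]; first by rewrite /minn; case: ltnP => //; mlia.
rewrite -[N.+1]addn1 iotaD count_cat IH /=.
rewrite /minn; case: ltnP => H1; case: ltnP => H2; case: (leqP (1 + N) t) => H3; mlia.
Qed.

Lemma count_lt_nth (s : seq nat) i : sorted ltn s -> i < size s ->
  count (fun y => y < nth 0 s i) s = i.
Proof.
elim: s i => [|a s IH] i //= Hs Hi.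
have Hall : all (fun y => a < y) s := order_path_min ltn_trans Hs.
have Hs' : sorted ltn s := path_sorted Hs.
case: i Hi => [|i] Hi /=.
  rewrite ltnn /=; apply/eqP; rewrite -leqn0 leqNgt -has_count; apply/hasP => [[y Hy Hya]].
  have := allP Hall y Hy; mlia.
have Hin : nth 0 s i \in s by apply: mem_nth.
have := allP Hall _ Hin => Ha; rewrite Ha IH //.
Qed.

Lemma uniq_fst pi : uniq (endpts pi) -> uniq (map fst pi).
Proof.
elim: pi => [|a pi IH] //= /andP [Ha /andP [_ Hu]].
rewrite IH // andbT; apply/negP => /mapP [b Hb E].
move: Ha; rewrite inE negb_or => /andP [_ /negP]; apply.
by rewrite E; apply: mem_endpts1.
Qed.

Lemma sum_rev_shift (F : nat -> nat) n : \sum_(1 <= x < n.+1) F (n - x) = \sum_(0 <= i < n) F i.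
Proof.
rewrite big_nat_rev (@eq_big_nat _ _ _ _ _ _ (fun x => F (x - 1))); last first.
  by move=> x Hx; congr F; mlia.
by rewrite big_add1 /=; apply: eq_big_nat => x _; rewrite subn1.
Qed.

Lemma count_sum (s : seq nat) (P : pred nat) : count P s = \sum_(0 <= i < size s) P (nth 0 s i).
Proof.
rewrite -sum1_count (big_nth 0) big_mkcond /=; apply: eq_bigr => i _; by case: (P _).
Qed.

Section Matching.
Variables (n : nat) (pi : seq (nat * nat)).
Hypothesis HM : is_matching n pi.
#[local] Set Default Proof Using "All".

Lemma Mlt a : a \in pi -> a.1 < a.2.
Proof. by case: HM => H _ _ Ha; apply: (allP H). Qed.

Lemma Mperm : perm_eq (endpts pi) (iota 1 (2 * n)).
Proof. by case: HM. Qed.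

Lemma Mnc a b : a \in pi -> b \in pi -> ~~ [&& a.1 < b.1, b.1 < a.2 & a.2 < b.2].
Proof. by case: HM => _ _ H; apply: H. Qed.

Lemma Muniq : uniq (endpts pi).
Proof. by rewrite (perm_uniq Mperm) iota_uniq. Qed.

Lemma Mrange v : v \in endpts pi -> 1 <= v <= 2 * n.
Proof. rewrite (perm_mem Mperm) mem_iota; mlia. Qed.

Lemma Mcount (P : pred nat) : count P (endpts pi) = count P (iota 1 (2 * n)).
Proof. exact: (permP Mperm). Qed.

Lemma Msize : size pi = n.
Proof.
have := perm_size Mperm; rewrite size_iota.
have -> : size (endpts pi) = (size pi) * 2.
  rewrite /endpts; elim: (pi) => [|a s IH] //=; rewrite IH; mlia.
mlia.
Qed.

Lemma Mdistinct a b : a \in pi -> b \in pi -> a.1 != b.2.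
Proof.
move=> Ha Hb; apply/negP => /eqP E.
have := count_uniq_mem a.1 Muniq; rewrite mem_endpts1 // count_endpts => Hc.
have Hc' : count (fun c : nat * nat => c.1 == a.1) pi + count (fun c : nat * nat => c.2 == a.1) pi = 1 := Hc.
have H1 : 0 < count (fun c : nat * nat => c.1 == a.1) pi by rewrite -has_count; apply/hasP; exists a.
have H2 : 0 < count (fun c : nat * nat => c.2 == a.1) pi by rewrite -has_count; apply/hasP; exists b => //; rewrite E.
mlia.
Qed.

Definition cnt1 t := count (fun a : nat * nat => a.1 <= t) pi.
Definition cov t (a : nat * nat) := (a.1 <= t) && (t < a.2).

Lemma cov_count t : t <= 2 * n -> count (cov t) pi = cnt1 t * 2 - t.
Proof.
move=> Ht.
have H1 : cnt1 t = count (cov t) pi + count (fun a : nat * nat => a.2 <= t) pi.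
  apply: count_split => [[x y]|[x y]] Ha; have := @Mlt (x, y) Ha; rewrite /cov /=;
    case: (leqP x t) => h1; case: (leqP y t) => h2 //=; mlia.
have H2 : cnt1 t + count (fun a : nat * nat => a.2 <= t) pi = t.
  by rewrite /cnt1 -(count_endpts (fun v => v <= t)) Mcount count_iota_le /minn; case: ltnP => h; mlia.
mlia.
Qed.


Let s := openers pi.

Lemma s_size : size s = n.
Proof. by rewrite /s /openers size_sort size_map Msize. Qed.

Lemma s_perm : perm_eq s (map fst pi).
Proof. by rewrite /s /openers perm_sort perm_refl. Qed.

Lemma s_sorted : sorted ltn s.
Proof.
rewrite ltn_sorted_uniq_leq /s /openers sort_uniq uniq_fst ?Muniq //.
exact: (sort_sorted leq_total).
Qed.

Lemma s_mem v : v \in s -> v \in endpts pi.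
Proof.
rewrite (perm_mem s_perm) => /mapP [a Ha ->]; exact: mem_endpts1.
Qed.

Lemma s_inc i : i.+1 < n -> nth 0 s i < nth 0 s i.+1.
Proof.
move=> Hi; apply: (sorted_ltn_nth ltn_trans 0 s_sorted); rewrite ?inE ?s_size //; mlia.
Qed.

Lemma s_ge i : i < n -> i < nth 0 s i.
Proof.
elim: i => [|i IH] Hi.
  have : nth 0 s 0 \in s by apply: mem_nth; rewrite s_size.
  by move/s_mem/Mrange; mlia.
have := IH ltac:(mlia); have := @s_inc i Hi; mlia.
Qed.

Lemma s_le i : i < n -> nth 0 s i <= i.*2.+1.
Proof.
move=> Hi; set v := nth 0 s i.
have Hv : 1 <= v <= 2 * n by apply/Mrange/s_mem/mem_nth; rewrite s_size.
have H1 : count (fun w => w < v) (endpts pi) = v - 1.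
  rewrite Mcount (@eq_count _ _ (fun w => w <= v - 1)); last by move=> w /=; apply/idP/idP; mlia.
  rewrite count_iota_le /minn; case: ltnP => h; mlia.
rewrite count_endpts in H1.
have H2 : count (fun a : nat * nat => a.2 < v) pi <= count (fun a : nat * nat => a.1 < v) pi.
  apply: count_sub_in => [[x y]] Ha /= h; have := @Mlt (x, y) Ha; mlia.
have H3 : count (fun a : nat * nat => a.1 < v) pi = i.
  rewrite -(count_map fst (fun w => w < v)) -(permP s_perm) count_lt_nth ?s_size //.
  exact: s_sorted.
rewrite -addnn; mlia.
Qed.

Definition fpi x := if 1 <= x <= n then row_len n pi x else 0.

Lemma fpi_eq x : 1 <= x <= n -> fpi x = nth 0 s (n - x) - (n.+1 - x).
Proof.
move=> Hx; rewrite /fpi Hx /row_len /opener -/s; congr (nth 0 s _ - _); mlia.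
Qed.

Lemma Inv_fpi : Inv n fpi.
Proof.
split.
  move=> x Hx; case: (leqP x.+1 n) => Hxn.
    rewrite !fpi_eq; [|mlia|mlia].
    have := @s_inc (n - x.+1) ltac:(mlia).
    have -> : (n - x.+1).+1 = n - x by mlia.
    mlia.
  by rewrite /fpi; have -> : (1 <= x.+1 <= n) = false by apply/negbTE/negP => /andP [h1 h2]; mlia.
move=> x; case: (boolP (1 <= x <= n)) => Hx.
  rewrite fpi_eq //; have := @s_le (n - x) ltac:(mlia); rewrite -addnn; mlia.
by rewrite /fpi (negbTE Hx).
Qed.

Lemma young_fpi : young n pi = youngf n fpi.
Proof.
rewrite /young /youngf.
have : {in iota 1 n, forall x, row_len n pi x = fpi x}.
  by move=> x; rewrite mem_iota /fpi => Hx; have -> : (1 <= x <= n) by mlia.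
elim: (iota 1 n) => [|a l IH] // H /=.
rewrite H ?mem_head // IH // => x Hx; apply: H; by rewrite inE Hx orbT.
Qed.

Lemma cnt_fpi t : cnt n fpi t = cnt1 t.
Proof.
rewrite /cnt (@eq_big_nat _ _ _ _ _ _ (fun x => nat_of_bool (nth 0 s (n - x) <= t))); last first.
  move=> x Hx; rewrite /pos fpi_eq; last mlia.
  have := @s_ge (n - x) ltac:(mlia) => h; congr nat_of_bool; congr (_ <= _); mlia.
rewrite (sum_rev_shift (fun i => nat_of_bool (nth 0 s i <= t))).
rewrite /cnt1 -(count_map fst (fun w => w <= t)) -(permP s_perm) count_sum s_size //.
Qed.

Lemma hf_fpi t : t <= 2 * n -> hf n fpi t = count (cov t) pi.
Proof. by move=> Ht; rewrite cov_count // /hf cnt_fpi. Qed.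

Lemma Cmin p : 1 <= p <= n.-1 ->
  count (fun a : nat * nat => (a.1 <= p) && (hat n p <= a.2)) pi = minJ (hf n fpi) p (2 * n - p).
Proof.
move=> /andP [Hp1 Hp2]; rewrite -subn1 in Hp2.
have Hpq : p <= 2 * n - p by mlia.
have [ts [Hts Hm]] := @minJ_att (hf n fpi) p (2 * n - p) Hpq.
rewrite -Hm hf_fpi; last mlia.
apply/eqP; rewrite eqn_leq; apply/andP; split.
  apply: count_sub_in => [[x y]] Ha /=; rewrite /cov /hat /=; mlia.
apply: count_sub_in => [[x y]] Ha; rewrite /cov /hat /= => /andP [Hx Hy].
apply/negPn/negP => HC.
case: (leqP x p) => Hxp.
-
  have Hy2 : y <= 2 * n - p by move: HC; rewrite Hxp /=; mlia.
  have Hlt : count (cov y) pi < count (cov ts) pi.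
    apply: (@count_lt_in _ _ _ _ (x, y)); last 3 first.
    - exact: Ha.
    - by rewrite /cov /= Hx Hy.
    - by rewrite /cov /=; apply/negP => /andP [h1 h2]; mlia.
      move=> [b1 b2] Hb; rewrite /cov /= => /andP [Hb1 Hb2].
      have := @Mdistinct (b1, b2) (x, y) Hb Ha; have := @Mnc (x, y) (b1, b2) Ha Hb.
      rewrite /= => Hnc Hd.
      have Hb1' : b1 < y by mlia.
      case: (leqP b1 ts) => Hbt /=; first mlia.
      move: Hnc; have -> : x < b1 by mlia.
      by rewrite Hb1' Hb2.
  have := @minJ_lb (hf n fpi) p (2 * n - p) y ltac:(mlia).
  rewrite -Hm !hf_fpi; [mlia|mlia|mlia].
-
  have Hlt : count (cov (x - 1)) pi < count (cov ts) pi.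
    apply: (@count_lt_in _ _ _ _ (x, y)); last 3 first.
    - exact: Ha.
    - by rewrite /cov /= Hx Hy.
    - by rewrite /cov /=; apply/negP => /andP [h1 h2]; mlia.
      move=> [b1 b2] Hb; rewrite /cov /= => /andP [Hb1 Hb2].
      have := @Mdistinct (x, y) (b1, b2) Ha Hb; have := @Mnc (b1, b2) (x, y) Hb Ha.
      rewrite /= => Hnc Hd.
      have Hb2' : x < b2 by mlia.
      have Hb1' : b1 < x by mlia.
      move: Hnc; rewrite Hb1' Hb2' /= -leqNgt => Hyb.
      apply/andP; split; mlia.
  have := @minJ_lb (hf n fpi) p (2 * n - p) (x - 1) ltac:(mlia).
  rewrite -Hm !hf_fpi; [mlia|mlia|mlia].
Qed.

Lemma mA_Q p : 1 <= p <= n.-1 -> mA n pi p = Q n fpi p.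
Proof.
move=> Hp; have := @Cmin p Hp; move: (Hp) => /andP [Hp1 Hp2]; rewrite -subn1 in Hp2 => HC.
rewrite /mA /arches_L /arches_R !size_filter /Q -HC.
have HL : count (cov p) pi = count (fun a : nat * nat => [&& a.1 <= p, p < a.2 & a.2 < hat n p]) pi
   + count (fun a : nat * nat => (a.1 <= p) && (hat n p <= a.2)) pi.
  apply: count_split => [[x y]|[x y]] Ha; have := @Mlt (x, y) Ha; rewrite /cov /hat /=;
    bcase.
have HR : count (cov (2 * n - p)) pi = count (fun a : nat * nat => (a.1 <= p) && (hat n p <= a.2)) pi
   + count (fun a : nat * nat => [&& p < a.1, a.1 < hat n p & hat n p <= a.2]) pi.
  apply: count_split => [[x y]|[x y]] Ha; have := @Mlt (x, y) Ha; rewrite /cov /hat /=;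
    bcase.
rewrite !hf_fpi; [|mlia|mlia].
rewrite HL HR; congr half; mlia.
Qed.

End Matching.


Theorem theorem3p2 (n : nat) (pi : seq (nat * nat)) :
  is_matching n pi ->
  forall p : nat, 1 <= p <= n.-1 -> mA n pi p = mB n pi p.
Proof.
move=> HM p Hp.
rewrite (@mA_Q n pi HM p Hp) /mB /B_multiset /rim_decomposition (@young_fpi n pi HM).
by rewrite (@mB_fuel n p Hp) //; exact: (@Inv_fpi n pi HM).
Qed.
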